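(* Let $\langle A,f,g\rangle$ be a PS-algebra satisfying (ABT0) $x\leq f(x,x)$, (ABT2) $y\cdot f(x,z)\leq f(x\cdot f(x,y),z)$ and (ABT3) $f(x,g(x,-y)\cdot y)\leq y$ for all $x,y,z\in A$. Then $\langle A,f,g\rangle$ satisfies (ABTW): $a\neq0\Rightarrow g(a,a)\leq a$ for all $a\in A$, if and only if it satisfies: for all $a,b\in A$, if $a\cdot b\neq0$ then $g(a,b)\leq f(a,b)$.
   Context: A PS-algebra is $\langle A,f,g\rangle$ where $A$ is a Boolean algebra with at least two elements (operations $+,\cdot,-,0,1$) and $f,g\colon A^2\to A$ satisfy: $f(x,y)=0$ whenever $x=0$ or $y=0$; $f$ is additive in each argument ($f(x+x',y)=f(x,y)+f(x',y)$, $f(x,y+y')=f(x,y)+f(x,y')$); $g(x,y)=1$ whenever $x=0$ or $y=0$; $g$ is co-additive in each argument ($g(x+x',y)=g(x,y)\cdot g(x',y)$, $g(x,y+y')=g(x,y)\cdot g(x,y')$). *)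

(* Defs.v *)
From mathcomp Require Import all_boot all_order.
Set Implicit Arguments. Unset Strict Implicit. Unset Printing Implicit Defensive.
Import Order.Theory.
Local Open Scope order_scope.

(* A Boolean algebra is a complemented distributive lattice with top and
   bottom (ctbDistrLatticeType): + is join `|`, . is meet `&`, - is ~`,
   0 is \bot, 1 is \top. *)

Definition PS_algebra (d : Order.disp_t) (A : ctbDistrLatticeType d)
  (f g : A -> A -> A) : Prop :=
  ((\bot : A) <> \top) /\
      (forall x y : A, x = \bot \/ y = \bot -> f x y = \bot) /\
      (forall x x' y : A, f (x `|` x') y = f x y `|` f x' y) /\
      (forall x y y' : A, f x (y `|` y') = f x y `|` f x y') /\
      (forall x y : A, x = \bot \/ y = \bot -> g x y = \top) /\
      (forall x x' y : A, g (x `|` x') y = g x y `&` g x' y) /\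
      (forall x y y' : A, g x (y `|` y') = g x y `&` g x y').

(* Main.v *)
Require Import Defs.
From mathcomp Require Import all_boot all_order.
Import Order.Theory.
Local Open Scope order_scope.

Theorem lemma34 (d : Order.disp_t) (A : ctbDistrLatticeType d) (f g : A -> A -> A) :
  PS_algebra f g ->
  (forall x : A, x <= f x x) ->
  (forall x y z : A, y `&` f x z <= f (x `&` f x y) z) ->
  (forall x y : A, f x (g x (~` y) `&` y) <= y) ->
  ((forall a : A, a <> \bot -> g a a <= a) <->
   (forall a b : A, a `&` b <> \bot -> g a b <= f a b)).
Proof.
move=> [_ [f0 [fl [fr [g0 [gl gr]]]]]] T0 T2 T3.
have fml : forall x x' y, x <= x' -> f x y <= f x' y.
  by move=> x x' y /join_idPr H; rewrite -H fl leUl.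
have fmr : forall x y y', y <= y' -> f x y <= f x y'.
  by move=> x y y' /join_idPr H; rewrite -H fr leUl.
have gml : forall x x' y, x <= x' -> g x' y <= g x y.
  by move=> x x' y /join_idPr H; rewrite -H gl leIl.
have gmr : forall x y y', y <= y' -> g x y' <= g x y.
  by move=> x y y' /join_idPr H; rewrite -H gr leIl.
split.
- move=> W a b Hab.
  apply: (le_trans (gmr _ _ _ (leIr b a))).
  apply: (le_trans (gml _ _ _ (leIl a b))).
  apply: (le_trans (W _ Hab)).
  apply: (le_trans (T0 _)).
  apply: (le_trans (fml _ _ _ (leIl a b))).
  exact: fmr (leIr b a).
- move=> H a Ha.
  set c := g a a `&` ~` a.
  have Hc : c = \bot.
    have h1 : f a c <= ~` a by have := T3 a (~` a); rewrite complK.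
    have h2 : a `&` f a c = \bot by by apply/eqP; rewrite disj_leC lexC.
    have h3 : c <= f a a.
      apply: (le_trans (leIl _ _)); apply: H; by rewrite meetxx.
    have := T2 a c a.
    rewrite h2 (f0 \bot a); last by left.
    by rewrite (meet_idPl h3) lex0 => /eqP.
  by move/eqP: Hc; rewrite /c disj_leC complK.
Qed.
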